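(* Let $n\ge 1$, $m\ge 2$ and $k\in\{0,\dots,n-1\}$, and let $\mathcal{C}^k_{ac}$ be the class of all complete acyclic $k$-bounded CP-nets over $n$ variables of domain size $m$, over the instance space $\mathcal{X}_{swap}$. Then \[\mathrm{RTD}(\mathcal{C}^k_{ac})=(m-1)\mathcal{M}_k=(m-1)(n-k)m^k+m^k-1.\]
   Context: Variables $V=\{v_1,\dots,v_n\}$, each $v_i$ with a finite domain $D_{v_i}$ of size $m$. An outcome assigns a value to every variable; $\mathcal{O}_X$ denotes assignments to $X\subseteq V$. A CP-net specifies for each $v_i$ a parent set $Pa(v_i)\subseteq V\setminus\{v_i\}$ and, for each context $\gamma\in\mathcal{O}_{Pa(v_i)}$, either a strict total order $\succ^{v_i}_\gamma$ on $D_{v_i}$ or nothing; it is complete if an order is given for every variable and context; parents are non-dummy (each parent actually affects the preferences). It is acyclic if the graph with edges $(v_j,v_i)$ for $v_j\in Pa(v_i)$ is acyclic, and $k$-bounded if all parent sets have size $\le k$. Improving flip: changing only $v_i$ from $o[v_i]$ to a value preferred under $\succ^{v_i}_{o[Pa(v_i)]}$; $o'\succ o$ iff a nonempty sequence of improving flips leads from $o$ to $o'$. A swap is an ordered pair $x=(x.1,x.2)$ of outcomes differing in exactly one variable; $\mathcal{X}_{swap}$ contains, for each unordered such pair, exactly one of its two orderings (fixed arbitrarily). A CP-net $N$ is the concept $c_N(x)=1$ iff $x.1\succ x.2$. For a concept class $\mathcal{C}$ and $c\in\mathcal{C}$, a teaching set for $c$ is a set of labeled examples with which $c$ is the only consistent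 concept in $\mathcal{C}$; $\mathrm{TD}(c,\mathcal{C})$ is the minimum size of a teaching set, $\mathrm{TD}_{min}(\mathcal{C})=\min_{c\in\mathcal{C}}\mathrm{TD}(c,\mathcal{C})$. Recursive teaching dimension: $\mathcal{C}_0=\mathcal{C}$, $\mathcal{C}_{i+1}=\mathcal{C}_i\setminus\{c\in\mathcal{C}_i:\mathrm{TD}(c,\mathcal{C}_i)=\mathrm{TD}_{min}(\mathcal{C}_i)\}$ while $\mathcal{C}_i\neq\emptyset$, and $\mathrm{RTD}(\mathcal{C})=\max_i\mathrm{TD}_{min}(\mathcal{C}_i)$. $\mathcal{M}_k=(n-k)m^k+\frac{m^k-1}{m-1}$. *)

(* Defs.v *)
From mathcomp Require Import all_boot all_order all_fingroup.
Set Implicit Arguments. Unset Strict Implicit. Unset Printing Implicit Defensive.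

Section CPnets.
Variables n m : nat.

Definition outcome := {ffun 'I_n -> 'I_m}.

Definition swapb (o o' : outcome) : bool := #|[set i | o i != o' i]| == 1.

(* A strict total order on 'I_m is encoded by a ranking permutation p:
   a is preferred to b  iff  p a < p b. *)
Definition prefv (p : {perm 'I_m}) (a b : 'I_m) : bool := p a < p b.

(* A (complete) CP-net: parent sets, and for each variable a conditional
   preference table given as a function of the whole outcome (required below
   to depend only on the values of the parents, i.e. on the context). *)
Definition cpnet : finType :=
  ({ffun 'I_n -> {set 'I_n}} * {ffun 'I_n -> {ffun outcome -> {perm 'I_m}}})%type.

Definition Pa (N : cpnet) (i : 'I_n) : {set 'I_n} := N.1 i.
Definition cpt (N : cpnet) (i : 'I_n) (o : outcome) : {perm 'I_m} := N.2 i o.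

Definition cpt_wf (N : cpnet) : bool :=
  [forall i, [forall o : outcome, [forall o' : outcome,
     [forall j in Pa N i, o j == o' j] ==> (cpt N i o == cpt N i o')]]].

Definition agree_except (j : 'I_n) (o o' : outcome) : bool :=
  [forall l, (l != j) ==> (o l == o' l)].

Definition nondummy (N : cpnet) : bool :=
  [forall i, [forall j in Pa N i, [exists o : outcome, [exists o' : outcome,
     agree_except j o o' && (cpt N i o != cpt N i o')]]]].

Definition dep_edge (N : cpnet) : rel 'I_n := fun j i => j \in Pa N i.

Definition acyclicb (N : cpnet) : bool :=
  [forall i, ~~ [exists j, dep_edge N i j && connect (dep_edge N) j i]].

Definition kbounded (k : nat) (N : cpnet) : bool := [forall i, #|Pa N i| <= k].

Definition ok_net (k : nat) (N : cpnet) : bool :=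
  [&& [forall i, i \notin Pa N i], cpt_wf N, nondummy N, acyclicb N & kbounded k N].

Definition iflip (N : cpnet) (o o' : outcome) : bool :=
  [exists i, agree_except i o o' && prefv (cpt N i o) (o' i) (o i)].

Definition succ (N : cpnet) (o' o : outcome) : bool :=
  [exists o1, iflip N o o1 && connect (iflip N) o1 o'].

(* An orientation choosing exactly one ordering of each unordered swap pair *)
Definition orientation_ok (orient : rel outcome) : Prop :=
  forall o o', swapb o o' -> orient o o' = ~~ orient o' o.

Definition Xswap (orient : rel outcome) : finType :=
  {x : outcome * outcome | swapb x.1 x.2 && orient x.1 x.2}.

Definition concept_of (orient : rel outcome) (N : cpnet) : {ffun Xswap orient -> bool} :=
  [ffun x => succ N (val x).1 (val x).2].

Definition Cac (orient : rel outcome) (k : nat) : {set {ffun Xswap orient -> bool}} :=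
  concept_of orient @: [set N : cpnet | ok_net k N].

End CPnets.

Section Teaching.
Variable X : finType.
Notation concept := {ffun X -> bool}.

Definition teaching_set (C : {set concept}) (c : concept) (S : {set X}) : bool :=
  [forall c' in C, [forall x in S, c' x == c x] ==> (c' == c)].

Definition TD (C : {set concept}) (c : concept) : nat :=
  \big[minn/#|X|]_(S : {set X} | teaching_set C c S) #|S|.

Definition TDmin (C : {set concept}) : nat :=
  \big[minn/#|X|]_(c in C) TD C c.

Definition rtd_step (C : {set concept}) : {set concept} :=
  C :\: [set c in C | TD C c == TDmin C].

(* C_i = iter i rtd_step C ; each step on a nonempty class removes at least
   one concept, so all nonempty C_i have i <= #|C|. *)
Definition RTD (C : {set concept}) : nat :=
  \max_(i < #|C|.+1 | iter i rtd_step C != set0) TDmin (iter i rtd_step C).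
End Teaching.

Definition Mk (n m k : nat) : nat := (n - k) * m ^ k + (m ^ k - 1) %/ (m - 1).

(* Main.v *)
Require Import Defs.
From mathcomp Require Import all_boot all_order all_fingroup.
From mathcomp Require Import zify.
Set Implicit Arguments. Unset Strict Implicit. Unset Printing Implicit Defensive.

Section Basics.
Variables (n m' : nat).
Local Notation m := m'.+2.
Local Notation out := (outcome n m).
Local Notation net := (cpnet n m).
Implicit Types (N : net) (o : out).

Lemma agree_exceptP j o o' :
  reflect (forall l, l != j -> o l = o' l) (agree_except j o o').
Proof.
apply: (iffP forallP) => H l.
  by move=> ne; have := H l; rewrite ne /= => /eqP.
by apply/implyP => /H ->.
Qed.

Lemma agree_except_sym j o o' : agree_except j o o' = agree_except j o' o.
Proof.
by apply/agree_exceptP/agree_exceptP => H l /H ->.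
Qed.

Lemma wfP N : cpt_wf N -> forall i o o',
  (forall j, j \in Pa N i -> o j = o' j) -> cpt N i o = cpt N i o'.
Proof.
move=> /forallP H i o o' Ho.
have /forallP /(_ o) /forallP /(_ o') /implyP Hi := H i.
apply/eqP; apply: Hi; apply/forallP => j; apply/implyP => /Ho ->; by [].
Qed.

Definition ess (f : out -> {perm 'I_m}) : {set 'I_n} :=
  [set j | [exists o, [exists o', agree_except j o o' && (f o != f o')]]].

Definition upd o (j : 'I_n) (a : 'I_m) : out := [ffun l => if l == j then a else o l].

Lemma upd_same o j a : upd o j a j = a.
Proof. by rewrite ffunE eqxx. Qed.
Lemma upd_other o j a l : l != j -> upd o j a l = o l.
Proof. by rewrite ffunE => /negbTE ->. Qed.

Lemma agree_upd o j a : agree_except j o (upd o j a).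
Proof. by apply/agree_exceptP => l ne; rewrite upd_other. Qed.

Lemma ess_dep f o o' : (forall j, j \in ess f -> o j = o' j) -> f o = f o'.
Proof.
move=> H.
suff: forall d o1, #|[set j | o1 j != o' j]| <= d ->
  (forall j, j \in ess f -> o1 j = o' j) -> f o1 = f o' by apply; [exact: leqnn|].
elim=> [|d IH] o1 Hd H1.
  have -> : o1 = o'; last by [].
  apply/ffunP => j; apply/eqP; apply/negPn/negP => ne.
  have : j \in [set j | o1 j != o' j] by rewrite inE.
  by move: Hd; rewrite leqn0 => /eqP /card0_eq ->.
case: (set_0Vmem [set j | o1 j != o' j]) => [E|[j]].
  apply: (IH o1); first by rewrite E cards0.
  exact: H1.
rewrite inE => ne.
have nj : j \notin ess f by apply/negP => /H1 /eqP; rewrite (negbTE ne).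
have -> : f o1 = f (upd o1 j (o' j)).
  apply/eqP; apply/negPn/negP => ne2; move/negP: nj; apply.
  rewrite inE; apply/existsP; exists o1; apply/existsP; exists (upd o1 j (o' j)).
  by rewrite agree_upd ne2.
apply: IH.
  have sub : [set l | upd o1 j (o' j) l != o' l] \subset [set l | o1 l != o' l] :\ j.
    apply/subsetP => l; rewrite !inE ffunE.
    by case: (l =P j) => [->|_]; rewrite ?eqxx.
  rewrite (leq_trans (subset_leq_card sub)) //.
  by rewrite (cardsD1 j) inE ne /= add1n ltnS in Hd.
move=> l Hl; rewrite ffunE; case: (l =P j) => [->//|_]; exact: H1.
Qed.

Lemma ess_sub f (Q : {set 'I_n}) :
  (forall o o', (forall j, j \in Q -> o j = o' j) -> f o = f o') -> ess f \subset Q.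
Proof.
move=> H; apply/subsetP => j; rewrite inE => /existsP [o /existsP [o' /andP [ag ne]]].
apply/negPn/negP => nQ; move/negP: ne; apply; apply/eqP; apply: H => l lQ.
by move/agree_exceptP: ag; apply; apply/eqP => E; rewrite -E lQ in nQ.
Qed.

End Basics.
Section Key.
Variables (n : nat) (key : 'I_n -> nat).
Hypothesis key_inj : injective key.

Definition posL i := #|[set j | key j < key i]|.

Lemma posL_lt i : posL i < n.
Proof.
have sub : [set j | key j < key i] \subset [set~ i].
  by apply/subsetP => j; rewrite !inE; apply: contraTneq => ->; rewrite ltnn.
apply: leq_ltn_trans (subset_leq_card sub) _; rewrite cardsC1 card_ord.
by case: (n) i {sub} => [[]|].
Qed.

Lemma posL_mono i j : key j < key i -> posL j < posL i.
Proof.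
move=> lt; rewrite /posL.
have sub : [set l | key l < key j] \subset [set l | key l < key i] :\ j.
  apply/subsetP => l; rewrite !inE => H; rewrite (ltn_trans H lt) andbT.
  by apply: contraTneq H => ->; rewrite ltnn.
apply: leq_ltn_trans (subset_leq_card sub) _.
by rewrite [X in _ < X](cardsD1 j) inE lt.
Qed.

Lemma posL_inj : injective posL.
Proof.
move=> i j E; apply: key_inj; case: (ltngtP (key i) (key j)) => // H.
  by have := posL_mono H; rewrite E ltnn.
by have := posL_mono H; rewrite E ltnn.
Qed.

Definition posLO i : 'I_n := Ordinal (posL_lt i).

Lemma posLO_inj : injective posLO.
Proof. by move=> i j /(congr1 val) /posL_inj. Qed.

Lemma sum_posL (F : nat -> nat) : \sum_i F (posL i) = \sum_(q < n) F q.
Proof.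
by rewrite [RHS](reindex_inj posLO_inj).
Qed.

End Key.

Section Order.
Variables (n m' : nat).
Local Notation m := m'.+2.
Local Notation out := (outcome n m).
Local Notation net := (cpnet n m).
Implicit Types (N : net) (o : out).

Definition sdesc N i := [set x | [exists c, (i \in Pa N c) && connect (dep_edge N) c x]].
Definition kap N i := (n - #|sdesc N i|) * n + i.

Lemma kap_edge N i j : acyclicb N -> j \in Pa N i -> kap N j < kap N i.
Proof.
move=> /forallP ac ji.
have sub : sdesc N i \subset sdesc N j :\ i.
  apply/subsetP => x; rewrite !inE => /existsP [c /andP [ic cx]].
  apply/andP; split.
    apply/negP => /eqP xi; subst x; move/negP: (ac i); apply.
    by apply/existsP; exists c; rewrite /dep_edge ic.
  apply/existsP; exists i; rewrite ji /=.
  apply: connect_trans (connect1 _) cx; exact: ic.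
have := subset_leq_card sub.
have := cardsD1 i (sdesc N j).
have -> : i \in sdesc N j by rewrite inE; apply/existsP; exists i; rewrite ji connect0.
have := max_card (sdesc N j); rewrite card_ord.
rewrite /kap; have := ltn_ord i; have := ltn_ord j.
move: (#|sdesc N i|) (#|sdesc N j :\ i|) (#|sdesc N j|) => a b c.
rewrite /=; nia.
Qed.

Lemma kap_inj N : injective (kap N).
Proof.
move=> i j E; apply: val_inj.
have : kap N i %% n = kap N j %% n by rewrite E.
by rewrite /kap !modnMDl !modn_small.
Qed.

Lemma acyclic_of_key N (key : 'I_n -> nat) :
  (forall i j, j \in Pa N i -> key j < key i) -> acyclicb N.
Proof.
move=> H; apply/forallP => i; apply/negP => /existsP [j /andP [ij /connectP [p]]].
have: forall a p, path (dep_edge N) a p -> key a <= key (last a p).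
  move=> a q; elim: q a => [|b q IHq] a //= /andP [ab pq].
  exact: leq_trans (ltnW (H _ _ ab)) (IHq _ pq).
move=> Hp pth E; have := Hp _ _ pth; rewrite -E.
by have := H _ _ ij; rewrite ltnNge => /negbTE ->.
Qed.

End Order.
Section Sem.
Variables (n m' k : nat).
Local Notation m := m'.+2.
Local Notation out := (outcome n m).
Local Notation net := (cpnet n m).
Variable N : net.
Hypothesis Hok : ok_net k N.

Lemma ok_irr i : i \notin Pa N i.
Proof. by case/and5P: Hok => /forallP. Qed.
Lemma ok_wf : cpt_wf N.
Proof. by case/and5P: Hok. Qed.
Lemma ok_ac : acyclicb N.
Proof. by case/and5P: Hok. Qed.

Definition Kmax := \max_l kap N l.
Definition keyG j := Kmax - kap N j.

Lemma kap_le j : kap N j <= Kmax.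
Proof. exact: (leq_bigmax_cond (P := xpredT)). Qed.

Lemma keyG_inj : injective keyG.
Proof.
move=> i j E; apply: (@kap_inj n m' N).
have := kap_le i; have := kap_le j; move: E; rewrite /keyG; lia.
Qed.

Definition posG := posL keyG.

Lemma posG_edge i j : j \in Pa N i -> posG i < posG j.
Proof.
move=> ji; apply: posL_mono; have := kap_edge ok_ac ji.
have := kap_le i; have := kap_le j; rewrite /keyG; lia.
Qed.

Definition rank i (o : out) : nat := cpt N i o (o i).
Definition Phi (o : out) := \sum_i rank i o * m ^ posG i.

Lemma geo r : \sum_(q < r) (m - 1) * m ^ q < m ^ r.
Proof.
suff : \sum_(q < r) (m - 1) * m ^ q + 1 = m ^ r by lia.
elim: r => [|r IH]; first by rewrite big_ord0.
rewrite big_ord_recr /= -addnA [_ * _ + 1]addnC addnA IH expnS.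
move: (m' .+2 ^ r) => x; rewrite /=; nia.
Qed.

Lemma cpt_agree i j (o o' : out) : agree_except i o o' -> i \notin Pa N j ->
  cpt N j o = cpt N j o'.
Proof.
move=> /agree_exceptP ag ni; apply: (wfP ok_wf) => l lP; apply: ag.
by apply: contraNneq ni => <-.
Qed.

Lemma Phi_flip (o o' : out) : iflip N o o' -> Phi o' < Phi o.
Proof.
case/existsP => i /andP [ag pr].
set r := posG i.
have Hi : rank i o' < rank i o.
  by rewrite /rank -(cpt_agree ag (ok_irr i)); exact: pr.
have Hj : forall j, j != i ->
   rank j o' * m ^ posG j <= rank j o * m ^ posG j +
     (if posG j < r then (m - 1) * m ^ posG j else 0).
  move=> j ne; case: (ltnP (posG j) r) => H.
    apply: leq_trans (_ : _ <= (m - 1) * m ^ posG j) (leq_addl _ _).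
    rewrite leq_mul2r; apply/orP; right.
    by have := ltn_ord (cpt N j o' (o' j)); rewrite /rank; lia.
  have nij : i \notin Pa N j.
    by apply/negP => /posG_edge; rewrite ltnNge H.
  rewrite addn0 /rank (cpt_agree ag nij).
  by move/agree_exceptP: ag => /(_ j ne) ->.
have G : \sum_(j | j != i) (if posG j < r then (m - 1) * m ^ posG j else 0) < m ^ r.
  have L : \sum_(j | j != i) (if posG j < r then (m - 1) * m ^ posG j else 0) <=
     \sum_j (if posG j < r then (m - 1) * m ^ posG j else 0).
    by rewrite [X in _ <= X](bigD1 i) //= leq_addl.
  apply: leq_ltn_trans L _.
  rewrite (sum_posL keyG_inj (fun q => if q < r then (m - 1) * m ^ q else 0)).
  rewrite -big_mkcond /= -(big_ord_widen _ (fun q => (m - 1) * m ^ q)); first exact: geo.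
  exact: ltnW (posL_lt _ _).
rewrite /Phi (bigD1 i) //= [X in _ < X](bigD1 i) //=.
have S : \sum_(j | j != i) rank j o' * m ^ posG j <= \sum_(j | j != i) (rank j o * m ^ posG j +
     (if posG j < r then (m - 1) * m ^ posG j else 0)) by apply: leq_sum.
rewrite big_split /= in S.
have : rank i o' * m ^ r + m ^ r <= rank i o * m ^ r.
  by rewrite -mulSnr leq_mul2r Hi orbT.
move: S G; set A := \sum_(j | _) (rank j o' * _); set B := \sum_(j | _) (rank j o * _).
set C := \sum_(j | _) _; rewrite -/r.
move: (rank i o' * m ^ r) (rank i o * m ^ r) (m ^ r) => a b c; lia.
Qed.

Lemma Phi_connect (o o' : out) : connect (iflip N) o o' -> Phi o' <= Phi o.
Proof.
case/connectP => p pth ->; elim: p o pth => [|b p IH] o //= /andP [ob pth].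
exact: leq_trans (IH _ pth) (ltnW (Phi_flip ob)).
Qed.

Lemma no_cycle (o o1 : out) : iflip N o o1 -> connect (iflip N) o1 o -> False.
Proof.
by move=> f c; have := Phi_connect c; have := Phi_flip f; lia.
Qed.

Lemma label_sem (x1 x2 : out) i : agree_except i x1 x2 -> x1 i != x2 i ->
  succ N x1 x2 = prefv (cpt N i x2) (x1 i) (x2 i).
Proof.
move=> ag ne; apply/idP/idP => [/existsP [o1 /andP [f c]]|pr].
  apply/negPn/negP => npr.
  have f2 : iflip N x1 x2.
    apply/existsP; exists i; rewrite ag /= /prefv.
    rewrite (cpt_agree ag (ok_irr i)).
    move: npr; rewrite /prefv -leqNgt leq_eqVlt => /orP [/eqP E|//].
    by move/val_inj/perm_inj: E => E; rewrite E eqxx in ne.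
  apply: (no_cycle f2); exact: connect_trans (connect1 f) c.
apply/existsP; exists x1; rewrite connect0 andbT; apply/existsP; exists i.
by rewrite agree_except_sym ag.
Qed.

End Sem.
Lemma Mk_sum (n m' k : nat) : k <= n ->
  \sum_(q < n) m'.+2 ^ minn q k = Mk n m'.+2 k.
Proof.
move=> kn; set m := m'.+2.
have G : forall r, m ^ r - 1 = (m - 1) * \sum_(q < r) m ^ q.
  elim=> [|r IH]; first by rewrite big_ord0 muln0.
  rewrite big_ord_recr /= mulnDr -IH expnS.
  have : 0 < m ^ r by rewrite expn_gt0.
  move: (m ^ r) => x; rewrite /m; nia.
rewrite /Mk G mulKn; last by rewrite /m.
rewrite -(big_mkord xpredT (fun q => m ^ minn q k)).
rewrite (big_cat_nat (leq0n k) kn) /= addnC; congr (_ + _).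
  rewrite (eq_big_nat _ _ (F2 := fun _ => m ^ k)); first by rewrite sum_nat_const_nat.
  by move=> i /andP [ki _]; rewrite (minn_idPr ki).
rewrite big_mkord; apply: eq_bigr => i _; by rewrite (minn_idPl (ltnW (ltn_ord i))).
Qed.

Lemma mono_id (M : nat) (h : nat -> nat) : (forall t, t < M -> h t < M) ->
  (forall t, t.+1 < M -> h t < h t.+1) -> forall t, t < M -> h t = t.
Proof.
move=> hM hI.
have A : forall t, t < M -> t <= h t.
  elim=> [|t IH] // tM; have := hI t tM; have := IH (ltnW tM); lia.
have B : forall s t, t + s < M -> h t + s < M.
  elim=> [|s IH] t; first by rewrite !addn0; apply: hM.
  move=> ts; have := IH t.+1; rewrite addSnnS => /(_ ts).
  have := hI t; have : t.+1 < M by lia. move=> H1 /(_ H1); lia.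
move=> t tM; have := A t tM; have := B (M - 1 - t) t; lia.
Qed.

Lemma perm_chain (m' : nat) (p q : {perm 'I_m'.+2}) :
  (forall t : nat, t.+1 < m'.+2 -> q ((p^-1)%g (inord t)) < q ((p^-1)%g (inord t.+1))) -> q = p.
Proof.
move=> H.
have E := mono_id (M := m'.+2) (h := fun t => q ((p^-1)%g (inord t))) (fun t _ => ltn_ord _) H.
apply/permP => x; apply: val_inj => /=.
by have := E (p x) (ltn_ord _); rewrite /= inord_val permK.
Qed.
Section Inst.
Variables (n' m' k : nat).
Local Notation n := n'.+1.
Local Notation m := m'.+2.
Local Notation out := (outcome n m).
Local Notation net := (cpnet n m).
Variable orient : rel out.
Hypothesis Hor : orientation_ok orient.
Local Notation X := (Xswap orient).
Implicit Types (A : {set 'I_n}) (o : out).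

Definition slice (A : {set 'I_n}) (o : out) := [forall l, (l \notin A) ==> (o l == ord0)].
Definition proj (A : {set 'I_n}) (o : out) : out := [ffun l => if l \in A then o l else ord0].

Lemma proj_slice A o : slice A (proj A o).
Proof. by apply/forallP => l; apply/implyP => nl; rewrite ffunE (negbTE nl). Qed.
Lemma proj_in A o j : j \in A -> proj A o j = o j.
Proof. by rewrite ffunE => ->. Qed.
Lemma slice_proj A o : slice A o -> proj A o = o.
Proof.
move/forallP => H; apply/ffunP => l; rewrite ffunE; case: ifP => // nl.
by have /implyP := H l; rewrite nl => /(_ isT) /eqP.
Qed.

Lemma card_slice A : #|[set o | slice A o]| = m ^ #|A|.
Proof.
rewrite -[X in X ^ _]card_ord -(card_pffun_on ord0 A predT).
apply: eq_card => o; rewrite inE; apply/forallP/pffun_onP => [H|[H _] l].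
  split=> //; apply/subsetP => l; rewrite inE; apply: contraR => nl.
  by have /implyP := H l; apply.
apply/implyP => nl; apply/negPn; apply: contra nl => ne.
by apply: (subsetP H); rewrite inE.
Qed.

Definition dv (x : out * out) : 'I_n := odflt ord0 [pick i | x.1 i != x.2 i].

Lemma dv_unique (x1 x2 : out) i : agree_except i x1 x2 -> x1 i != x2 i -> dv (x1, x2) = i.
Proof.
move=> /agree_exceptP ag ne; rewrite /dv; case: pickP => [j /= Hj|/(_ i) /=].
  by apply/eqP; apply: contraR Hj => /ag ->; rewrite eqxx.
by rewrite ne.
Qed.

Lemma dvP (x1 x2 : out) : swapb x1 x2 ->
  agree_except (dv (x1, x2)) x1 x2 /\ x1 (dv (x1, x2)) != x2 (dv (x1, x2)).
Proof.
case/cards1P => i E.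
have ag : agree_except i x1 x2.
  apply/agree_exceptP => l ne; apply/eqP/negPn/negP => H.
  have : l \in [set i | x1 i != x2 i] by rewrite inE H.
  by rewrite E inE (negbTE ne).
have ne : x1 i != x2 i by have : i \in [set i] := set11 i; rewrite -E inE.
by rewrite (dv_unique ag ne).
Qed.

Lemma swapb_agree (x1 x2 : out) i : agree_except i x1 x2 -> x1 i != x2 i -> swapb x1 x2.
Proof.
move=> /agree_exceptP ag ne; apply/cards1P; exists i; apply/setP => l.
rewrite !inE; case: (l =P i) => [->//|/eqP nl]; by rewrite ag ?eqxx.
Qed.

Lemma label_X (N : net) (x : X) : ok_net k N ->
  concept_of orient N x =
  prefv (cpt N (dv (val x)) (val x).2) ((val x).1 (dv (val x))) ((val x).2 (dv (val x))).
Proof.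
move=> ok; rewrite ffunE; case: x => [[x1 x2] /= /andP [sw _]].
by case: (dvP sw) => ag ne; rewrite (label_sem ok ag ne).
Qed.

Definition T2 := [set t : 'I_m | t < m'.+1].
Definition D1 (Qf : 'I_n -> {set 'I_n}) := [set io : 'I_n * out | slice (Qf io.1) io.2].
Definition Dset Qf := setX (D1 Qf) T2.

Lemma card_Dset Qf : #|Dset Qf| = (m - 1) * \sum_i m ^ #|Qf i|.
Proof.
rewrite cardsX [RHS]mulnC; congr (_ * _).
  rewrite -sum1_card big_mkcond /=.
  transitivity (\sum_(p : 'I_n * out) (fun i o => if (i, o) \in D1 Qf then 1 else 0) p.1 p.2).
    by apply: eq_bigr => [[i o]].
  rewrite -(pair_bigA _ (fun i o => if (i, o) \in D1 Qf then 1 else 0)).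
  apply: eq_bigr => i _; rewrite -card_slice -sum1_card [RHS]big_mkcond /=.
  by apply: eq_bigr => o _; rewrite !inE.
have -> : T2 = [set~ ord_max].
  apply/setP => t; rewrite !inE; apply/idP/idP => H.
    by apply: contraTneq H => ->; rewrite ltnn.
  by have := ltn_ord t; rewrite ltnS leq_eqVlt => /orP [/eqP E|//]; move: H; rewrite -(inj_eq val_inj) /= E eqxx.
by rewrite cardsC1 card_ord /= subn1.
Qed.

Definition decode (Qf : 'I_n -> {set 'I_n}) (N : net) (x : X) : 'I_n * out * 'I_m :=
  let v := val x in let i := dv v in let p := cpt N i v.2 in
  (i, proj (Qf i) v.2, if p (v.1 i) < p (v.2 i) then p (v.1 i) else p (v.2 i)).

End Inst.
Section Upper.
Variables (n' m' k : nat).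
Local Notation n := n'.+1.
Local Notation m := m'.+2.
Local Notation out := (outcome n m).
Local Notation net := (cpnet n m).
Variable orient : rel out.
Hypothesis Hor : orientation_ok orient.
Local Notation X := (Xswap orient).

Lemma agree_upd2 (o : out) i a b : agree_except i (upd o i a) (upd o i b).
Proof. by apply/agree_exceptP => l ne; rewrite !upd_other. Qed.

Definition inst_of (N : net) (d : 'I_n * out * 'I_m) : option X :=
  let i := d.1.1 in let o := d.1.2 in let p := cpt N i o in
  let x1 := upd o i ((p^-1)%g d.2) in let x2 := upd o i ((p^-1)%g (inord d.2.+1)) in
  if orient x1 x2 then insub (x1, x2) else insub (x2, x1).

Definition Sam (N : net) : {set X} :=
  [set x : X | Some x \in [seq inst_of N d | d <- enum (Dset m' (Pa N))]].

Lemma card_Sam N : #|Sam N| <= (m - 1) * \sum_i m ^ #|Pa N i|.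
Proof.
rewrite -card_Dset -(card_imset _ Some_inj) [#|Dset _ _|]cardE -(size_map (inst_of N)).
apply: leq_trans (card_size _).
apply: subset_leq_card; apply/subsetP => y /imsetP [x]; rewrite inE => H ->; exact: H.
Qed.

Lemma concept_eq (N N' : net) : (forall i o, cpt N i o = cpt N' i o) ->
  concept_of orient N = concept_of orient N'.
Proof.
move=> H.
have E : iflip N =2 iflip N'.
  by move=> o o'; apply: eq_existsb => i; rewrite H.
apply/ffunP => x; rewrite !ffunE /succ; apply: eq_existsb => o1.
by rewrite E (eq_connect E).
Qed.

Lemma upper_slice (N N' : net) i (o : out) : ok_net k N -> ok_net k N' ->
  (forall x, x \in Sam N -> concept_of orient N' x = concept_of orient N x) ->
  slice (Pa N i) o -> cpt N' i o = cpt N i o.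
Proof.
move=> ok ok' agr so; apply: perm_chain => t tm.
set p := cpt N i o; set q := cpt N' i o.
set d := (i, o, (inord t : 'I_m)).
have tm' : t < m by lia.
have dD : d \in Dset m' (Pa N).
  by rewrite in_setX !inE /= so /= inordK.
set a := (p^-1)%g (inord t); set b := (p^-1)%g (inord t.+1).
set x1 := upd o i a; set x2 := upd o i b.
have ab : a != b.
  apply/negP => /eqP /perm_inj /(congr1 val); rewrite /= !inordK //; lia.
have ag : agree_except i x1 x2 by apply: agree_upd2.
have ne : x1 i != x2 i by rewrite /x1 /x2 !upd_same.
have sw : swapb x1 x2 by exact: swapb_agree ag ne.
have sw' : swapb x2 x1.
  by apply: (@swapb_agree _ _ x2 x1 i); rewrite 1?agree_except_sym // eq_sym.
have cN : forall (NN : net), ok_net k NN -> forall y, agree_except i o y -> cpt NN i y = cpt NN i o.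
  by move=> NN okNN y agy; rewrite (cpt_agree okNN agy (ok_irr okNN i)).
have p_ab : p a < p b by rewrite /a /b !permKV !inordK //.
have q_ne : q a != q b by apply: contra ab => /eqP /perm_inj ->.
have inS : forall x, inst_of N d = Some x -> x \in Sam N.
  move=> x E; rewrite inE -E; apply: map_f; by rewrite mem_enum.
move: (agr) => /(_ _ (inS _ _)) H.
rewrite /inst_of /= (inordK tm') -/p -/a -/b -/x1 -/x2 in H *.
case: ifP => or12 /= in H.
  have P12 : (swapb x1 x2 && orient x1 x2) by rewrite sw or12.
  have := H (Sub (x1, x2) P12) (@insubT _ _ X (x1, x2) P12).
  rewrite (label_X _ ok') (label_X _ ok) /= (dv_unique ag ne) (cN _ ok' _ (agree_upd _ _ _)) (cN _ ok _ (agree_upd _ _ _)).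
  by rewrite /x1 /x2 !upd_same -/p -/q /prefv p_ab => ->.
have or21 : orient x2 x1 by move: (Hor sw); rewrite or12 => /esym/negbFE.
have P21 : (swapb x2 x1 && orient x2 x1) by rewrite sw' or21.
have := H (Sub (x2, x1) P21) (@insubT _ _ X (x2, x1) P21).
rewrite (label_X _ ok') (label_X _ ok) /= (@dv_unique _ _ x2 x1 i); last by rewrite eq_sym.
  rewrite (cN _ ok' _ (agree_upd _ _ _)) (cN _ ok _ (agree_upd _ _ _)).
  rewrite /x1 /x2 !upd_same -/p -/q /prefv.
  have pba : (p b < p a) = false by rewrite ltnNge (ltnW p_ab).
  by rewrite pba => /negbT; rewrite -leqNgt => le; rewrite ltn_neqAle le andbT; exact: q_ne.
by rewrite agree_except_sym.
Qed.

End Upper.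
Lemma TD_le (X : finType) (C : {set {ffun X -> bool}}) c S :
  teaching_set C c S -> TD C c <= #|S|.
Proof.
move=> H; rewrite /TD -minEnat.
exact: (Order.TotalTheory.bigmin_le_cond _ (P := fun S => teaching_set C c S) (fun S => #|S|) H).
Qed.

Lemma TD_ge (X : finType) (C : {set {ffun X -> bool}}) c B :
  (forall S, teaching_set C c S -> B <= #|S|) -> B <= TD C c.
Proof.
move=> H; rewrite /TD; apply: (big_ind (fun v => B <= v)).
- by rewrite -cardsT; apply: H; apply/forall_inP => c' _; apply/implyP => /forall_inP E;
     apply/eqP/ffunP => x; apply/eqP; apply: E; rewrite inE.
- by move=> a b Ha Hb; rewrite leq_min Ha Hb.
- exact: H.
Qed.

Lemma sum_each (n : nat) (F G : 'I_n -> nat) : (forall i, F i <= G i) ->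
  \sum_i G i <= \sum_i F i -> forall i, G i = F i.
Proof.
move=> FG S i; apply/eqP; rewrite eqn_leq FG andbT leqNgt; apply/negP => lt.
have E : \sum_j G j = \sum_j F j + \sum_j (G j - F j).
  by rewrite -big_split; apply: eq_bigr => j _ /=; rewrite subnKC ?FG.
have D : G i - F i <= \sum_j (G j - F j) by rewrite (bigD1 i) //= leq_addr.
lia.
Qed.

Section Upper2.
Variables (n' m' k : nat).
Local Notation n := n'.+1.
Local Notation m := m'.+2.
Local Notation out := (outcome n m).
Local Notation net := (cpnet n m).
Variable orient : rel out.
Hypothesis Hor : orientation_ok orient.
Local Notation X := (Xswap orient).

Lemma sub_Pa (N N' : net) i : ok_net k N -> ok_net k N' ->
  (forall o, slice (Pa N i) o -> cpt N' i o = cpt N i o) -> Pa N i \subset Pa N' i.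
Proof.
move=> ok ok' H; apply/subsetP => j ji.
have nd : nondummy N by case/and5P: ok.
move/forallP: nd => /(_ i) /forall_inP /(_ j ji) /existsP [o1 /existsP [o2 /andP [ag ne]]].
apply/negPn/negP => nj; move/negP: ne; apply.
set A := Pa N i.
have E1 : cpt N i o1 = cpt N i (proj A o1) by apply: (wfP (ok_wf ok)) => l lA; rewrite proj_in.
have E2 : cpt N i o2 = cpt N i (proj A o2) by apply: (wfP (ok_wf ok)) => l lA; rewrite proj_in.
rewrite E1 E2 -!H ?proj_slice //; apply/eqP; apply: (wfP (ok_wf ok')) => l lP'.
rewrite !ffunE; case: ifP => // lA.
have lj : l != j by apply: contraNneq nj => <-.
by move/agree_exceptP: ag => /(_ l lj).
Qed.

Lemma TD_upper (C' : {set {ffun X -> bool}}) (N : net) : ok_net k N ->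
  concept_of orient N \in C' -> C' \subset Cac orient k ->
  (forall N', ok_net k N' -> concept_of orient N' \in C' ->
     \sum_i #|Pa N' i| <= \sum_i #|Pa N i|) ->
  TD C' (concept_of orient N) <= (m - 1) * \sum_i m ^ #|Pa N i|.
Proof.
move=> ok inC sub max.
apply: (@leq_trans #|Sam orient N|); last exact: card_Sam.
apply: TD_le.
apply/forall_inP => c' c'C; apply/implyP => /forall_inP agr.
have := subsetP sub _ c'C; case/imsetP => N'; rewrite inE => ok' E; subst c'.
have sl : forall i o, slice (Pa N i) o -> cpt N' i o = cpt N i o.
  move=> i o so; apply: (upper_slice Hor ok ok') => // x xS; apply/eqP; exact: agr.
have sP : forall i, Pa N i \subset Pa N' i by move=> i; apply: sub_Pa ok ok' (sl i).
have eP : forall i, Pa N' i = Pa N i.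
  move=> i; apply/eqP; rewrite eq_sym eqEcard sP /=.
  rewrite (sum_each (F := fun i => #|Pa N i|) (G := fun i => #|Pa N' i|)) //.
    by move=> l; apply: subset_leq_card.
  exact: max.
apply/eqP; apply: concept_eq => i o.
have -> : cpt N' i o = cpt N' i (proj (Pa N i) o).
  by apply: (wfP (ok_wf ok')) => l; rewrite eP => lP; rewrite proj_in.
have -> : cpt N i o = cpt N i (proj (Pa N i) o).
  by apply: (wfP (ok_wf ok)) => l lP; rewrite proj_in.
by rewrite sl // proj_slice.
Qed.

End Upper2.
Lemma tperm_adj M (t u a b : 'I_M) : nat_of_ord u = (nat_of_ord t).+1 -> a != b ->
  (tperm t u a < tperm t u b) != (a < b) -> (if a < b then a else b) = t.
Proof.
move=> tu ab.
have E : forall x, nat_of_ord (tperm t u x) =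
   if nat_of_ord x == nat_of_ord t then nat_of_ord u
   else if nat_of_ord x == nat_of_ord u then nat_of_ord t else nat_of_ord x.
  move=> x; case: tpermP => [->|->|na nb]; rewrite ?eqxx //=.
    by rewrite tu eqn_leq ltnn.
  have -> : (nat_of_ord x == nat_of_ord t) = false by apply/eqP => /val_inj.
  by have -> : (nat_of_ord x == nat_of_ord u) = false by apply/eqP => /val_inj.
rewrite !E => H.
have ab' : nat_of_ord a != nat_of_ord b by [].
apply: val_inj; rewrite /= (fun_if (@nat_of_ord M)).
move: H ab'; move: (nat_of_ord a) (nat_of_ord b) (nat_of_ord t) (nat_of_ord u) tu => A B T U ->.
by case: (A =P T); case: (A =P T.+1); case: (B =P T); case: (B =P T.+1); case: ifP; lia.
Qed.

Lemma set_between (T : finType) (A B : {set T}) s : A \subset B -> #|A| <= s -> s <= #|B| ->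
  exists Q : {set T}, [&& A \subset Q, Q \subset B & #|Q| == s].
Proof.
move=> AB; elim: s => [|s IH] As sB.
  by exists A; rewrite subxx AB /=; move: As; rewrite leqn0.
case: (ltnP #|A| s.+1) => [lt|ge]; last first.
  by exists A; rewrite subxx AB /= eqn_leq As ge.
have [Q /and3P [AQ QB /eqP cQ]] := IH lt (ltnW sB).
case: (set_0Vmem (B :\: Q)) => [/eqP E|[x]].
  by rewrite setD_eq0 in E; have := subset_leq_card E; lia.
rewrite inE => /andP [xQ xB]; exists (x |: Q).
rewrite cardsU1 xQ cQ add1n eqxx andbT; apply/andP; split.
  exact: subset_trans AQ (subsetUr _ _).
by rewrite subUset sub1set xB.
Qed.

Section Lower.
Variables (n' m' k : nat).
Local Notation n := n'.+1.
Local Notation m := m'.+2.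
Local Notation out := (outcome n m).
Local Notation net := (cpnet n m).
Variable orient : rel out.
Hypothesis Hor : orientation_ok orient.
Local Notation X := (Xswap orient).

Variable N : net.
Hypothesis ok : ok_net k N.

Definition Pred i := [set j | kap N j < kap N i].
Local Notation pos := (posL (kap N)).

Definition Qf i : {set 'I_n} := odflt set0 [pick Q : {set 'I_n} | [&& Pa N i \subset Q, Q \subset Pred i & #|Q| == minn (pos i) k]].

Lemma Pa_Pred i : Pa N i \subset Pred i.
Proof. by apply/subsetP => j ji; rewrite inE; apply: kap_edge (ok_ac ok) ji. Qed.

Lemma QfP i : [&& Pa N i \subset Qf i, Qf i \subset Pred i & #|Qf i| == minn (pos i) k].
Proof.
rewrite /Qf; case: pickP => [Q //|none].
have kb : #|Pa N i| <= k by case/and5P: ok => _ _ _ _ /forallP.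
have := subset_leq_card (Pa_Pred i) => pb.
have H1 : #|Pa N i| <= minn (pos i) k by rewrite leq_min pb kb.
have H2 : minn (pos i) k <= #|Pred i| by rewrite geq_minl.
have [Q HQ] := set_between (Pa_Pred i) H1 H2.
by rewrite none in HQ.
Qed.

Lemma Qf_sub i : Pa N i \subset Qf i. Proof. by case/and3P: (QfP i). Qed.
Lemma Qf_Pred i : Qf i \subset Pred i. Proof. by case/and3P: (QfP i). Qed.
Lemma Qf_card i : #|Qf i| = minn (pos i) k. Proof. by case/and3P: (QfP i) => _ _ /eqP. Qed.
Lemma i_notin_Qf i : i \notin Qf i.
Proof. by apply/negP => /(subsetP (Qf_Pred i)); rewrite inE ltnn. Qed.

Section Nbr.
Variables (i : 'I_n) (g : out) (t : 'I_m).
Hypothesis gs : slice (Qf i) g.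
Hypothesis tm : t < m'.+1.

Definition u : 'I_m := inord t.+1.
Lemma u_val : nat_of_ord u = (nat_of_ord t).+1.
Proof. by rewrite /u inordK. Qed.

Definition fp (o : out) : {perm 'I_m} :=
  if proj (Qf i) o == g then (cpt N i o * tperm t u)%g else cpt N i o.

Definition nbr : net :=
  ([ffun l => if l == i then ess fp else Pa N l],
   [ffun l => if l == i then [ffun o => fp o] else N.2 l]).

Lemma nbr_Pa l : Pa nbr l = if l == i then ess fp else Pa N l.
Proof. by rewrite /Pa /nbr /= ffunE. Qed.
Lemma nbr_cpt l (o : out) : cpt nbr l o = if l == i then fp o else cpt N l o.
Proof. by rewrite /cpt /nbr /= ffunE; case: eqP => // _; rewrite ffunE. Qed.

Lemma fp_dep (o o' : out) : (forall j, j \in Qf i -> o j = o' j) -> fp o = fp o'.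
Proof.
move=> H; rewrite /fp.
have -> : proj (Qf i) o = proj (Qf i) o'.
  by apply/ffunP => l; rewrite !ffunE; case: ifP => // /H.
have -> : cpt N i o = cpt N i o'.
  by apply: (wfP (ok_wf ok)) => j /(subsetP (Qf_sub i)) /H.
by [].
Qed.

Lemma ess_fp : ess fp \subset Qf i.
Proof. apply: ess_sub => o o'; exact: fp_dep. Qed.

Lemma nbr_ok : ok_net k nbr.
Proof.
case/and5P: (ok) => /forallP irr wf nd ac kb.
apply/and5P; split.
- apply/forallP => l; rewrite nbr_Pa; case: eqP => [->|_]; last exact: irr.
  by apply/negP => /(subsetP ess_fp); rewrite (negbTE (i_notin_Qf i)).
- apply/forallP => l; apply/forallP => o; apply/forallP => o'; apply/implyP => /forall_inP H.
  rewrite !nbr_cpt; case: (l =P i) => [E|ne].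
    by apply/eqP; apply: ess_dep => j jE; apply/eqP; apply: H; rewrite nbr_Pa E eqxx.
  apply/eqP; apply: (wfP wf) => j jP; apply/eqP; apply: H.
  by rewrite nbr_Pa (introF eqP ne).
- apply/forallP => l; apply/forall_inP => j; rewrite nbr_Pa; case: eqP => [->|ne] jP.
    move: jP; rewrite inE => /existsP [o /existsP [o' /andP [ag ne]]].
    by apply/existsP; exists o; apply/existsP; exists o'; rewrite ag !nbr_cpt eqxx.
  move/forallP: nd => /(_ l) /forall_inP /(_ j jP) /existsP [o /existsP [o' /andP [ag ne']]].
  by apply/existsP; exists o; apply/existsP; exists o'; rewrite ag !nbr_cpt (introF eqP ne).
- apply: (acyclic_of_key (key := kap N)) => l j; rewrite nbr_Pa; case: eqP => [->|_].
    by move/(subsetP ess_fp)/(subsetP (Qf_Pred i)); rewrite inE.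
  exact: kap_edge ac.
- apply/forallP => l; rewrite nbr_Pa; case: eqP => _; last by move/forallP: kb.
  apply: leq_trans (subset_leq_card ess_fp) _; rewrite Qf_card; exact: geq_minr.
Qed.

Lemma proj_upd (o : out) j a : j \notin Qf i -> proj (Qf i) (upd o j a) = proj (Qf i) o.
Proof.
move=> nj; apply/ffunP => l; rewrite !ffunE; case: ifP => // lQ.
by case: eqP => // E; rewrite -E lQ in nj.
Qed.

Lemma nbr_decode (x : X) : concept_of orient nbr x != concept_of orient N x ->
  decode Qf N x = (i, g, t).
Proof.
rewrite (label_X _ nbr_ok) (label_X _ ok) /decode.
move: (valP x); case: (val x) => x1 x2 /= /andP [sw _].
case: (dvP sw) => /=; set l := dv _ => ag ne.
rewrite nbr_cpt; case: (l =P i) => [El|nl]; last by move=> H; exfalso; move/eqP: H; apply.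
rewrite El /fp; case: (proj (Qf i) x2 =P g) => [Eg|]; last by move=> _ H; exfalso; move/eqP: H; apply.
rewrite /prefv !permM => H.
rewrite Eg; congr (_, _, _).
apply: tperm_adj u_val _ H.
by apply: contra ne => /eqP /perm_inj E; rewrite El E.
Qed.

Lemma nbr_differs : exists x : X, concept_of orient nbr x != concept_of orient N x.
Proof.
set p := cpt N i g.
set a := (p^-1)%g t; set b := (p^-1)%g u.
set x1 := upd g i a; set x2 := upd g i b.
have tm' : t.+1 < m by lia.
have ab : a != b.
  apply/negP => /eqP /perm_inj /(congr1 (@nat_of_ord m)); rewrite u_val; lia.
have ag : agree_except i x1 x2 by apply/agree_exceptP => l ne; rewrite !upd_other.
have ne : x1 i != x2 i by rewrite /x1 /x2 !upd_same.
have sw : swapb x1 x2 by exact: swapb_agree ag ne.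
have sw' : swapb x2 x1.
  by apply: (@swapb_agree _ _ x2 x1 i); rewrite 1?agree_except_sym // eq_sym.
have c1 : cpt N i x1 = p by rewrite /x1 -(cpt_agree ok (agree_upd g i a) (ok_irr ok i)).
have c2 : cpt N i x2 = p by rewrite /x2 -(cpt_agree ok (agree_upd g i b) (ok_irr ok i)).
have pr1 : proj (Qf i) x1 = g by rewrite proj_upd ?i_notin_Qf // slice_proj.
have pr2 : proj (Qf i) x2 = g by rewrite proj_upd ?i_notin_Qf // slice_proj.
have pa : p a = t by rewrite permKV.
have pb : p b = u by rewrite permKV.
have tu1 : tperm t u t = u by rewrite tpermL.
have tu2 : tperm t u u = t by rewrite tpermR.
case or12 : (orient x1 x2).
  have P12 : (swapb x1 x2 && orient x1 x2) by rewrite sw or12.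
  exists (Sub (x1, x2) P12).
  rewrite (label_X _ nbr_ok) (label_X _ ok) /= (dv_unique ag ne) nbr_cpt eqxx /fp pr2 eqxx.
  rewrite c2 /prefv !permM /x1 /x2 !upd_same pa pb tu1 tu2 u_val.
  by rewrite ltnSn ltnNge leqnSn.
have or21 : orient x2 x1 by apply/negPn; rewrite -(Hor sw) or12.
have P21 : (swapb x2 x1 && orient x2 x1) by rewrite sw' or21.
exists (Sub (x2, x1) P21).
rewrite (label_X _ nbr_ok) (label_X _ ok) /= (@dv_unique _ _ x2 x1 i); last by rewrite eq_sym.
  rewrite nbr_cpt eqxx /fp pr1 eqxx.
  rewrite c1 /prefv !permM /x1 /x2 !upd_same pa pb tu1 tu2 u_val.
  by rewrite ltnSn ltnNge leqnSn.
by rewrite agree_except_sym.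
Qed.

End Nbr.

Lemma lower_bound (S : {set X}) :
  teaching_set (Cac orient k) (concept_of orient N) S ->
  (m - 1) * \sum_i m ^ minn (pos i) k <= #|S|.
Proof.
move=> TS.
have -> : \sum_i m ^ minn (pos i) k = \sum_i m ^ #|Qf i|.
  by apply: eq_bigr => i _; rewrite Qf_card.
rewrite -card_Dset; apply: leq_trans (leq_imset_card (decode Qf N) S).
apply: subset_leq_card; apply/subsetP => [[[i g] t]]; rewrite in_setX !inE /= => /andP [gs tm].
have [x xd] := nbr_differs gs tm.
move/forall_inP: TS => /(_ (concept_of orient (nbr i g t))).
have inC : concept_of orient (nbr i g t) \in Cac orient k.
  by apply: imset_f; rewrite inE; exact: nbr_ok.
move=> /(_ inC) /implyP H.
have : [forall x in S, concept_of orient (nbr i g t) x == concept_of orient N x] = false.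
  apply: negbTE; apply: contra xd => /H /eqP ->; by [].
move/negbT; rewrite negb_forall_in => /existsP [y /andP [yS yd]].
by apply/imsetP; exists y => //; rewrite (nbr_decode tm yd).
Qed.

End Lower.
Lemma Mk_eq (n m' k : nat) :
  (m'.+2 - 1) * Mk n m'.+2 k = (m'.+2 - 1) * (n - k) * m'.+2 ^ k + m'.+2 ^ k - 1.
Proof.
set m := m'.+2.
have G : forall r, m ^ r - 1 = (m - 1) * \sum_(q < r) m ^ q.
  elim=> [|r IH]; first by rewrite big_ord0 muln0.
  rewrite big_ord_recr /= mulnDr -IH expnS.
  have : 0 < m ^ r by rewrite expn_gt0.
  move: (m ^ r) => x; rewrite /m; nia.
rewrite /Mk G mulKn; last by rewrite /m.
rewrite mulnDr -G mulnA.
have : 0 < m ^ k by rewrite expn_gt0.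
move=> H; rewrite addnBA //.
Qed.

Lemma iter_sub (X : finType) (C : {set {ffun X -> bool}}) j : iter j (@rtd_step X) C \subset C.
Proof.
elim: j => [|j IH] /=; first exact: subxx.
by apply: subset_trans IH; rewrite /rtd_step subDset subsetUr.
Qed.

Section Main.
Variables (n' m' k : nat).
Local Notation n := n'.+1.
Local Notation m := m'.+2.
Local Notation out := (outcome n m).
Local Notation net := (cpnet n m).
Variable orient : rel out.
Hypothesis Hor : orientation_ok orient.
Hypothesis kn : k < n.
Local Notation X := (Xswap orient).

Definition N0 : net := ([ffun _ => set0], [ffun _ => [ffun _ => 1%g]]).

Lemma N0_ok : ok_net k N0.
Proof.
apply/and5P; split.
- by apply/forallP => i; rewrite /Pa ffunE inE.
- by apply/forallP => i; apply/forallP => o; apply/forallP => o'; rewrite /cpt !ffunE eqxx implybT.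
- by apply/forallP => i; apply/forall_inP => j; rewrite /Pa ffunE inE.
- by apply: (acyclic_of_key (key := fun _ => 0)) => i j; rewrite /Pa ffunE inE.
- by apply/forallP => i; rewrite /Pa ffunE cards0.
Qed.

Lemma sum_bound (N : net) : ok_net k N -> \sum_i m ^ #|Pa N i| <= Mk n m k.
Proof.
move=> ok; rewrite -Mk_sum ?(ltnW kn) //.
rewrite -(sum_posL (@kap_inj n m' N) (fun q => m ^ minn q k)).
apply: leq_sum => i _; apply: leq_pexp2l => //.
rewrite leq_min; apply/andP; split.
  exact: subset_leq_card (Pa_Pred ok i).
by case/and5P: ok => _ _ _ _ /forallP.
Qed.

Lemma RTD_val : RTD (Cac orient k) = (m - 1) * Mk n m k.
Proof.
set C := Cac orient k; set B := (m - 1) * Mk n m k.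
have TDlow : forall c, c \in C -> forall S, teaching_set C c S -> B <= #|S|.
  move=> c /imsetP [N]; rewrite inE => okN -> S TS.
  have := lower_bound Hor okN TS.
  by rewrite (sum_posL (@kap_inj n m' N) (fun q => m ^ minn q k)) Mk_sum // ltnW.
have c0C : concept_of orient N0 \in C by apply: imset_f; rewrite inE; exact: N0_ok.
have XB : B <= #|X|.
  rewrite -cardsT; apply: (TDlow _ c0C); apply/forall_inP => c' _; apply/implyP => /forall_inP E.
  by apply/eqP/ffunP => x; apply/eqP; apply: E; rewrite inE.
apply/eqP; rewrite eqn_leq; apply/andP; split.
  apply/bigmax_leqP => j Hj.
  set Cj := iter j (@rtd_step X) C.
  have sub : Cj \subset C by exact: iter_sub.
  case: (set_0Vmem Cj) => [E|[c cC]]; first by move: Hj; rewrite -/Cj E eqxx.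
  have := subsetP sub _ cC; case/imsetP => N1; rewrite inE => ok1 Ec.
  pose A := [set N : net | ok_net k N && (concept_of orient N \in Cj)].
  have N1A : N1 \in A by rewrite inE ok1 -Ec cC.
  case: (arg_maxnP (fun N : net => \sum_i #|Pa N i|) N1A) => Nm HA maxm.
  move: (HA : Nm \in A); rewrite inE => /andP [okm inm].
  apply: (@leq_trans (TD Cj (concept_of orient Nm))).
    rewrite /TDmin -minEnat.
    exact: (Order.TotalTheory.bigmin_le_cond _ (P := fun c => c \in Cj) (fun c => TD Cj c) inm).
  have maxm' : forall N', ok_net k N' -> concept_of orient N' \in Cj ->
      \sum_i #|Pa N' i| <= \sum_i #|Pa Nm i|.
    move=> N' ok' in'; apply: (maxm N').
    by have : N' \in A by rewrite inE ok' in'.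
  apply: leq_trans (TD_upper Hor okm inm sub maxm') _.
  by rewrite leq_mul2l sum_bound // orbT.
have B0 : B <= TDmin C.
  rewrite /TDmin; apply: (big_ind (fun v => B <= v)) => //.
    by move=> a b Ha Hb; rewrite leq_min Ha Hb.
  by move=> c cC; apply: TD_ge => S; apply: TDlow.
apply: leq_trans B0 _.
have H0 : (0 < #|C|.+1)%N by [].
have := @leq_bigmax_cond _ (fun i : 'I_#|C|.+1 => iter i (@rtd_step X) C != set0)
   (fun i : 'I_#|C|.+1 => TDmin (iter i (@rtd_step X) C)) (Ordinal H0).
rewrite /=; apply; apply/set0Pn; exists (concept_of orient N0); exact: c0C.
Qed.

End Main.

Unset Implicit Arguments.

Theorem theorem2 (n m k : nat) (orient : rel (outcome n m)) :
  1 <= n -> 2 <= m -> k < n -> orientation_ok orient ->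
  RTD (Cac orient k) = (m - 1) * Mk n m k /\
  RTD (Cac orient k) = (m - 1) * (n - k) * m ^ k + m ^ k - 1.
Proof.
case: n orient => [|n'] orient // _.
case: m orient => [|[|m']] orient // _ kn Hor.
have E := RTD_val Hor kn.
by split; rewrite E // Mk_eq.
Qed.
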